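(* Let $w = w_1 w_2 w_3 \cdots$ be any infinite binary word, and define $$r_{\inf}(w) = \liminf_{n \to \infty} \frac{|Z(w^{(n)})|}{n},\quad r_{\sup}(w) = \limsup_{n \to \infty} \frac{|Z(w^{(n)})|}{n},$$ $$R_{\inf}(w) = \liminf_{n \to \infty} \frac{|P(w^{(n)})|}{n},\quad R_{\sup}(w) = \limsup_{n \to \infty} \frac{|P(w^{(n)})|}{n}.$$ Then $$\frac{5 r_{\inf}(w) - 2}{3} \leq R_{\inf}(w) \leq r_{\inf}(w) \quad\text{and}\quad \frac{5 r_{\sup}(w) - 2}{3} \leq R_{\sup}(w) \leq r_{\sup}(w).$$ Moreover, for every real number $2/5 \leq r \leq 1$ there exists an infinite binary word $w$ with $r_{\inf}(w) = r_{\sup}(w) = r$ and $R_{\inf}(w) = R_{\sup}(w) = (5r-2)/3$; and for every real number $0 \leq r \leq 1$ there exists an infinite binary word $w$ with $r_{\inf}(w) = r_{\sup}(w) = r$ and $R_{\inf}(w) = R_{\sup}(w) = r$.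
   Context: For a finite or infinite binary word $w = w_1 w_2 \cdots$ ($w_i \in \{0,1\}$), $\ell(w)$ is its length and $w^{(n)}$ denotes its initial subword of length $n$. $Z(w)$ is the set of indices $i$ with $w_i = 0$. $P(w)$ is the set of indices $i \geq 2$ such that at least one of the following holds: (i) $\ell(w) \geq i$ and $w_{i-1} w_i = 00$; (ii) $\ell(w) \geq i+2$ and $w_{i-1} w_i w_{i+1} w_{i+2} = 0100$; (iii) $\ell(w) \geq i+3$ and $w_{i-1} w_i w_{i+1} w_{i+2} w_{i+3} = 01010$. *)

(* Defs.v *)
From HB Require Import structures.
From mathcomp Require Import all_boot all_order all_algebra.
From mathcomp Require Import all_classical all_reals all_analysis.
Set Implicit Arguments. Unset Strict Implicit. Unset Printing Implicit Defensive.
Import Order.TTheory GRing.Theory Num.Theory.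

(* An infinite binary word w = w_1 w_2 ... is a function w : nat -> bool,
   letter w_i being [w i] for i >= 1 (the value [w 0] is ignored).
   Letter 0 is encoded by [false], letter 1 by [true]. *)
Definition word := nat -> bool.

Definition is0 (w : word) (i : nat) : bool := ~~ w i.

Definition Zcount (w : word) (n : nat) : nat := count (is0 w) (iota 1 n).

(* membership of index i in P(w^(n)), for 2 <= i (and i <= n for (i)) *)
Definition inP (w : word) (n i : nat) : bool :=
  [|| (i <= n) && is0 w i.-1 && is0 w i,
      (i + 2 <= n) && [&& is0 w i.-1, w i, is0 w i.+1 & is0 w i.+2]
    | (i + 3 <= n) && [&& is0 w i.-1, w i, is0 w i.+1, w i.+2 & is0 w i.+3]].

Definition Pcount (w : word) (n : nat) : nat := count (inP w n) (iota 2 n.-1).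

Local Open Scope ring_scope.

Definition zratio (R : realType) (w : word) (n : nat) : R := (Zcount w n)%:R / n%:R.
Definition pratio (R : realType) (w : word) (n : nat) : R := (Pcount w n)%:R / n%:R.

Definition r_inf (R : realType) (w : word) : R := limn_inf (zratio R w).
Definition r_sup (R : realType) (w : word) : R := limn_sup (zratio R w).
Definition R_inf (R : realType) (w : word) : R := limn_inf (pratio R w).
Definition R_sup (R : realType) (w : word) : R := limn_sup (pratio R w).

(* Main.v *)
Require Import Defs.
From HB Require Import structures.
From mathcomp Require Import all_boot all_order all_algebra.
From mathcomp Require Import all_classical all_reals all_analysis.
From mathcomp Require Import zify ring lra.
From Stdlib Require Import PeanoNat.
Import Order.TTheory GRing.Theory Num.Theory.
Import numFieldNormedType.Exports.

Lemma count_iotaS (p : pred nat) m k :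
  count p (iota m k.+1) = count p (iota m k) + p (m + k).
Proof. by rewrite -addn1 iotaD count_cat /= addn0. Qed.

Lemma Zcount_S w n : Zcount w n.+1 = Zcount w n + is0 w n.+1.
Proof. by rewrite /Zcount count_iotaS add1n. Qed.

Lemma cnt_bound (p : pred nat) m L b :
  count (fun i => p i && (i < b)) (iota m L) = count p (iota m (minn L (b - m))).
Proof.
elim: L m => [|L IH] m /=; first by rewrite min0n.
case: (ltnP m b) => hmb.
  have -> : minn L.+1 (b - m) = (minn L (b - m.+1)).+1.
    by rewrite -minnSS; congr minn; lia.
  by rewrite /= IH andbT.
rewrite andbF IH add0n.
have -> : b - m.+1 = 0 by lia.
have -> : b - m = 0 by lia.
by rewrite !minn0.
Qed.

Lemma count_or3 T (a b c : pred T) s :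
  (forall x, a x -> ~~ b x && ~~ c x) -> (forall x, b x -> ~~ c x) ->
  count (fun x => [|| a x, b x | c x]) s = count a s + count b s + count c s.
Proof.
move=> hab hbc; elim: s => //= x s ->.
case ha: (a x); first by move: (hab x ha) => /andP[/negbTE -> /negbTE ->]; lia.
case hb: (b x); first by move: (hbc x hb) => /negbTE ->; lia.
case: (c x) => /=; lia.
Qed.

Definition dP (a b c x e : bool) : nat :=
  (~~x && ~~e) + (~~b && c && ~~x && ~~e) + (~~a && b && ~~c && x && ~~e).

Definition PA (w : word) i := is0 w i.-1 && is0 w i.
Definition PB (w : word) i := [&& is0 w i.-1, w i, is0 w i.+1 & is0 w i.+2].
Definition PC (w : word) i := [&& is0 w i.-1, w i, is0 w i.+1, w i.+2 & is0 w i.+3].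

Lemma Pcount_split w n : Pcount w n =
  count (PA w) (iota 2 n.-1) + count (PB w) (iota 2 (n - 3)) + count (PC w) (iota 2 (n - 4)).
Proof.
rewrite /Pcount.
have E : inP w n =1 fun i => [|| PA w i && (i < n.+1), PB w i && (i < n - 1)
                                  | PC w i && (i < n - 2)].
  move=> i; rewrite /inP /PA /PB /PC.
  have -> : (i + 2 <= n) = (i < n - 1) by apply/idP/idP; lia.
  have -> : (i + 3 <= n) = (i < n - 2) by apply/idP/idP; lia.
  by rewrite ltnS; case: (i <= n); case: (i < n - 1); case: (i < n - 2);
     rewrite /= ?andbT ?andbF.
rewrite (eq_count E) count_or3.
- rewrite !cnt_bound; congr (_ + _ + _); congr (count _ (iota _ _)); lia.
- move=> i; rewrite /PA /PB /PC /is0.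
  by case: (w i); case: (w i.+2); rewrite /= ?andbF ?andbT.
- move=> i; rewrite /PB /PC /is0.
  by case: (w i); case: (w i.+2); rewrite /= ?andbF ?andbT.
Qed.

Lemma Pcount_S w n : w 0 = true ->
  Pcount w n.+1 = Pcount w n + dP (w (n - 3)) (w (n - 2)) (w (n - 1)) (w n) (w n.+1).
Proof.
move=> w0; rewrite !Pcount_split.
case: n => [|[|[|[|n]]]].
- by rewrite /= /dP w0.
- by rewrite /= /dP /PA /is0 /= w0 /=; lia.
- rewrite /= /dP /PA /is0 /= w0 /=; lia.
- rewrite /= /dP /PA /PB /is0 /= w0 /= (_ : 3 - 2 = 1) // (_ : 3 - 1 = 2) //; lia.
rewrite (_ : n.+4.+1.-1 = n.+3.+1) // (_ : n.+4.-1 = n.+3) //.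
rewrite (_ : n.+4.+1 - 3 = n.+1.+1); last by lia.
rewrite (_ : n.+4 - 3 = n.+1); last by lia.
rewrite (_ : n.+4.+1 - 4 = n.+1); last by lia.
rewrite (_ : n.+4 - 4 = n); last by lia.
rewrite !count_iotaS /dP /PA /PB /PC /is0 /=.
rewrite !addSn !add0n !subSS !subn0 /=.
case: (w n.+1); case: (w n.+2); case: (w n.+3); case: (w n.+4); case: (w n.+4.+1); rewrite /=; lia.
Qed.
Definition h1 (a b c d : bool) : nat :=
  match a, b, c, d with
  | false, false, false, false => 3
  | false, false, false, true => 1
  | false, false, true, false => 4
  | false, false, true, true => 0
  | false, true, false, false => 3
  | false, true, false, true => 2
  | false, true, true, false => 3
  | false, true, true, true => 0
  | true, false, false, false => 3
  | true, false, false, true => 1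
  | true, false, true, false => 4
  | true, false, true, true => 0
  | true, true, false, false => 3
  | true, true, false, true => 1
  | true, true, true, false => 3
  | true, true, true, true => 0
  end.
Definition h2 (a b c d : bool) : nat :=
  match a, b, c, d with
  | false, false, false, false => 0
  | false, false, false, true => 0
  | false, false, true, false => 1
  | false, false, true, true => 0
  | false, true, false, false => 0
  | false, true, false, true => 1
  | false, true, true, false => 0
  | false, true, true, true => 0
  | true, false, false, false => 0
  | true, false, false, true => 0
  | true, false, true, false => 1
  | true, false, true, true => 0
  | true, true, false, false => 0
  | true, true, false, true => 0
  | true, true, true, false => 0
  | true, true, true, true => 0
  end.
Definition h3 (a b c d : bool) : nat :=
  match a, b, c, d with
  | false, false, false, false => 0
  | false, false, false, true => 0
  | false, false, true, false => 2
  | false, false, true, true => 0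
  | false, true, false, false => 0
  | false, true, false, true => 2
  | false, true, true, false => 3
  | false, true, true, true => 0
  | true, false, false, false => 0
  | true, false, false, true => 0
  | true, false, true, false => 4
  | true, false, true, true => 0
  | true, true, false, false => 0
  | true, true, false, true => 1
  | true, true, true, false => 1
  | true, true, true, true => 0
  end.

Lemma sub_shift n : (n.+1 - 3 = n - 2) * (n.+1 - 2 = n - 1) * (n.+1 - 1 = n).
Proof. split; [split|]; lia. Qed.

Lemma low_inv w n : w 0 = true ->
  5 * Zcount w n <= 3 * Pcount w n + 2 * n + h1 (w (n - 3)) (w (n - 2)) (w (n - 1)) (w n).
Proof.
move=> w0; elim: n => [|n IH]; first by rewrite /Zcount /= w0.
rewrite Zcount_S Pcount_S // !sub_shift /is0 /dP.
move: IH; case: (w (n - 3)); case: (w (n - 2)); case: (w (n - 1)); case: (w n);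
  case: (w n.+1); rewrite /=; lia.
Qed.

Lemma up_inv w n : w 0 = true ->
  Pcount w n + h2 (w (n - 3)) (w (n - 2)) (w (n - 1)) (w n) <= Zcount w n.
Proof.
move=> w0; elim: n => [|n IH]; first by rewrite /Zcount /Pcount /= w0.
rewrite Zcount_S Pcount_S // !sub_shift /is0 /dP.
move: IH; case: (w (n - 3)); case: (w (n - 2)); case: (w (n - 1)); case: (w n);
  case: (w n.+1); rewrite /=; lia.
Qed.

Definition fix0 (w : word) : word := fun i => if i == 0 then true else w i.

Lemma Zcount_fix0 w n : Zcount (fix0 w) n = Zcount w n.
Proof.
apply: eq_in_count => i; rewrite mem_iota => /andP[h _].
by rewrite /is0 /fix0; case: eqP => // e; move: h; rewrite e.
Qed.

Lemma Pcount_fix0 w n : Pcount (fix0 w) n = Pcount w n.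
Proof.
apply: eq_in_count => i; rewrite mem_iota => /andP[h _].
rewrite /inP /is0 /fix0.
have -> : (i.-1 == 0) = false by apply/eqP; lia.
have -> : (i == 0) = false by apply/eqP; lia.
have -> : (i.+1 == 0) = false by [].
have -> : (i.+2 == 0) = false by [].
by have -> : (i.+3 == 0) = false by [].
Qed.

Lemma part1_low w n : 5 * Zcount w n <= 3 * Pcount w n + 2 * n + 4.
Proof.
rewrite -Zcount_fix0 -Pcount_fix0.
have := @low_inv (fix0 w) n erefl.
case: (fix0 w (n - 3)); case: (fix0 w (n - 2)); case: (fix0 w (n - 1));
  case: (fix0 w n); rewrite /=; lia.
Qed.

Lemma part1_up w n : Pcount w n <= Zcount w n.
Proof.
rewrite -Zcount_fix0 -Pcount_fix0.
have := @up_inv (fix0 w) n erefl; lia.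
Qed.

Lemma Zcount_le w n : Zcount w n <= n.
Proof. by rewrite /Zcount (leq_trans (count_size _ _)) // size_iota. Qed.

Definition isqrt (n : nat) : nat := Nat.sqrt n.

Lemma isqrt_spec n : isqrt n * isqrt n <= n < (isqrt n).+1 * (isqrt n).+1.
Proof.
have [h1 h2] := Nat.sqrt_spec n (Nat.le_0_l n).
rewrite /isqrt; apply/andP; split; [apply/ssrnat.leP|apply/ssrnat.ltP]; lia.
Qed.

Lemma isqrt_unique n s : s * s <= n < s.+1 * s.+1 -> isqrt n = s.
Proof.
move=> /andP[/ssrnat.leP h1 /ssrnat.ltP h2]; rewrite /isqrt; apply: Nat.sqrt_unique; lia.
Qed.

Lemma isqrt_step n :
  isqrt n.+1 = isqrt n \/ (isqrt n.+1 = (isqrt n).+1 /\ n.+1 = (isqrt n).+1 * (isqrt n).+1).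
Proof.
have := isqrt_spec n; set s := isqrt n => /andP[h1 h2].
case: (ltnP n.+1 (s.+1 * s.+1)) => h3.
  by left; apply: isqrt_unique; rewrite h3 andbT; lia.
have e : n.+1 = s.+1 * s.+1 by lia.
right; split => //; apply: isqrt_unique; rewrite e leqnn /=.
nia.
Qed.

Lemma isqrt_mono m n : m <= n -> isqrt m <= isqrt n.
Proof. move=> /ssrnat.leP h; apply/ssrnat.leP; exact: Nat.sqrt_le_mono. Qed.

Section Blocks.
Variable f : nat -> nat.
Hypothesis f0 : f 0 = 0.
Hypothesis fmono : forall s, f s <= f s.+1.
Hypothesis fstep : forall s, f s.+1 <= f s + s.*2.+1.

Definition zb s := f s.+1 - f s.

Definition rule (j : nat) : bool := zb (isqrt j) <= j - isqrt j * isqrt j.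

Definition uw : word := fun i => match i with 0 => true | j.+1 => rule j end.

Lemma uw0 : uw 0 = true. Proof. by []. Qed.

Lemma Zc_formula n :
  Zcount uw n = f (isqrt n) + minn (zb (isqrt n)) (n - isqrt n * isqrt n).
Proof.
elim: n => [|n IH].
  by rewrite /Zcount /= (@isqrt_unique 0 0) // f0.
rewrite Zcount_S IH /is0 /= /rule.
have := isqrt_spec n; move: (fmono (isqrt n)) (fstep (isqrt n)).
case: (isqrt_step n) => [->|[-> e]]; rewrite /zb; set s := isqrt n;
  set S := s * s => h1 h2 /andP[h3 h4].
  have -> : n.+1 - S = (n - S).+1 by lia.
  case: (leqP (f s.+1 - f s) (n - S)) => /= h; lia.
have -> : n.+1 - s.+1 * s.+1 = 0 by lia.
have e2 : n - S = s.*2 by rewrite /S; nia.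
rewrite e2; case: (leqP (f s.+1 - f s) s.*2) => /= h; lia.
Qed.

Definition Ecount (n : nat) : nat := count (fun m => uw m.+1 != uw m) (iota 0 n).

Lemma Ecount_S n : Ecount n.+1 = Ecount n + (uw n.+1 != uw n).
Proof. by rewrite /Ecount count_iotaS add0n. Qed.

Lemma Ecount_inv n : Ecount n.+1 + ~~ uw n.+1 <= (isqrt n).*2 + 2.
Proof.
elim: n => [|n IH].
  by rewrite /Ecount /=; case: (rule 0).
rewrite Ecount_S; move: IH; rewrite /= /rule.
have := isqrt_spec n.
case: (isqrt_step n) => [->|[-> e]]; set s := isqrt n; set S := s * s.
  move=> /andP[h3 h4].
  case: (leqP (zb s) (n.+1 - S)) => h5; case: (leqP (zb s) (n - S)) => h6 /=;
    lia.
move=> _; case: (zb s.+1 <= _); case: (zb s <= n - S) => /=; lia.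
Qed.

Lemma Ecount_le n : Ecount n <= (isqrt n).*2 + 2.
Proof.
case: n => [|n]; first by [].
have := Ecount_inv n; have := @isqrt_mono _ _ (leqnSn n); lia.
Qed.

Lemma PZE n : Zcount uw n <= Pcount uw n + Ecount n.
Proof.
elim: n => [|n IH]; first by rewrite /Zcount.
rewrite Zcount_S Pcount_S // Ecount_S /dP /is0.
move: IH; case: (uw (n - 3)); case: (uw (n - 2)); case: (uw (n - 1)); case: (uw n);
  case: (uw n.+1); rewrite /=; lia.
Qed.

Definition kb (a b c d : bool) : nat :=
  match a, b, c, d with
  | false, false, false, false => 0
  | false, false, false, true => 3
  | false, false, true, false => 3
  | false, false, true, true => 2
  | false, true, false, false => 2
  | false, true, false, true => 3
  | false, true, true, false => 3
  | false, true, true, true => 1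
  | true, false, false, false => 1
  | true, false, false, true => 3
  | true, false, true, false => 3
  | true, false, true, true => 2
  | true, true, false, false => 2
  | true, true, false, true => 3
  | true, true, true, false => 3
  | true, true, true, true => 0
  end.

Definition pat (k : nat) : bool := ~~ odd k.
Definition ww : word := fun i => uw i && pat (i %% 5).
Definition Gp (k : nat) : nat := nth 0 [:: 2; 0; 3; 1; 4] k.

Lemma ww0 : ww 0 = true. Proof. by []. Qed.

Lemma C4 n :
  (n.*2 + 3 * Zcount uw n + uw n * Gp (n.+1 %% 5) + 2 <=
     5 * Zcount ww n + (uw n).*2 + 4 * Ecount n) /\
  (5 * Zcount ww n + (uw n).*2 <=
     n.*2 + 3 * Zcount uw n + uw n * Gp (n.+1 %% 5) + 2 + 4 * Ecount n).
Proof.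
elim: n => [|n [IH1 IH2]]; first by rewrite /Zcount /Ecount /=.
rewrite !Zcount_S Ecount_S /is0 (_ : ww n.+1 = uw n.+1 && pat (n.+1 %% 5)) //.
have e : n.+2 %% 5 = (if n.+1 %% 5 == 4 then 0 else (n.+1 %% 5).+1).
  by case: eqP => h; lia.
rewrite e; have hk : n.+1 %% 5 < 5 by lia.
move: IH1 IH2 hk; set k := n.+1 %% 5.
move: (uw n) (uw n.+1) => a b.
case: k => [|[|[|[|[|k]]]]] // IH1 IH2 _;
  move: IH1 IH2; case: a; case: b; rewrite /= /pat /Gp /=; lia.
Qed.

Definition constw (m : nat) : bool :=
  [&& uw (m - 3) == uw (m - 2), uw (m - 2) == uw (m - 1),
      uw (m - 1) == uw m & uw m == uw m.+1].
Definition badstep (m : nat) : bool := (m < 4) || ~~ constw m.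
Definition badc (n : nat) : nat := count badstep (iota 0 n).

Lemma badc_inv n :
  badc n + kb (uw (n - 3)) (uw (n - 2)) (uw (n - 1)) (uw n) <= 4 * Ecount n + minn n 4.
Proof.
elim: n => [|n IH]; first by rewrite /badc /Ecount.
rewrite /badc count_iotaS add0n -/(badc n) Ecount_S !sub_shift /badstep /constw.
have hm : minn n.+1 4 = minn n 4 + (n < 4) by case: (ltnP n 4) => h; lia.
rewrite hm; move: IH; case: (n < 4);
  case: (uw (n - 3)); case: (uw (n - 2)); case: (uw (n - 1)); case: (uw n);
  case: (uw n.+1); rewrite /=; lia.
Qed.

Lemma good_step n : ~~ badstep n ->
  3 * dP (ww (n - 3)) (ww (n - 2)) (ww (n - 1)) (ww n) (ww n.+1) + 2 +
  h3 (ww (n - 2)) (ww (n - 1)) (ww n) (ww n.+1) <=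
  5 * ~~ ww n.+1 + h3 (ww (n - 3)) (ww (n - 2)) (ww (n - 1)) (ww n).
Proof.
rewrite /badstep negb_or -leqNgt /constw negbK => /andP[n4 /and4P[/eqP e1 /eqP e2 /eqP e3 /eqP e4]].
rewrite /ww -e4 -e3 -e2 -e1.
have hk : n %% 5 < 5 by lia.
have f3 : (n - 3) %% 5 = (n %% 5 + 2) %% 5 by lia.
have f2 : (n - 2) %% 5 = (n %% 5 + 3) %% 5 by lia.
have f1 : (n - 1) %% 5 = (n %% 5 + 4) %% 5 by lia.
have f0' : n.+1 %% 5 = (n %% 5 + 1) %% 5 by lia.
rewrite f3 f2 f1 f0'; move: hk; case: (n %% 5) => [|[|[|[|[|k]]]]] //= _;
  case: (uw (n - 3)); rewrite /pat /dP /=; lia.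
Qed.

Lemma C5 n :
  3 * Pcount ww n + n.*2 + h3 (ww (n - 3)) (ww (n - 2)) (ww (n - 1)) (ww n)
    <= 5 * Zcount ww n + (badc n).*2.
Proof.
elim: n => [|n IH]; first by rewrite /Zcount /Pcount /badc /=.
rewrite Zcount_S Pcount_S // /badc count_iotaS add0n -/(badc n) !sub_shift /is0.
case hb: (badstep n).
  move: IH; rewrite /dP.
  case: (ww (n - 3)); case: (ww (n - 2)); case: (ww (n - 1)); case: (ww n);
    case: (ww n.+1); rewrite /=; lia.
have := good_step n (negbT hb); lia.
Qed.

End Blocks.

Local Open Scope classical_set_scope.
Local Open Scope ring_scope.

Section Real.
Variable R : realType.
Implicit Types (u v : nat -> R).

Lemma bnd_of u B : (forall n, `|u n| <= B) -> bounded_fun u.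
Proof.
move=> hB; rewrite /= /bounded_near; near=> M => n _ /=.
apply: le_trans (hB n) _; near: M; exact: nbhs_pinfty_ge (num_real B).
Unshelve. all: end_near. Qed.

Lemma bnd_get u : bounded_fun u -> exists B, forall n, `|u n| <= B.
Proof.
move=> [M [Mreal]]/(_ (`|M| + 1)).
rewrite (le_lt_trans (ler_norm _)) ?ltrDl// => /(_ erefl) aM.
by exists (`|M| + 1) => n; apply: aM.
Qed.

Lemma bnd01 u : (forall n, 0 <= u n <= 1) -> bounded_fun u.
Proof.
move=> h; apply: (@bnd_of _ 1) => n.
by have /andP[h0 h1] := h n; rewrite ger0_norm.
Qed.

Lemma infs_scale_le u a n : 0 < a -> has_lbound (range u) ->
  a * infs u n <= infs (fun k => a * u k) n.
Proof.
move=> a0 hl; apply: lb_le_inf; first by exists (a * u n); exists n => /=.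
move=> _ [k /= kn <-]; rewrite ler_pM2l //; apply: ge_inf.
  exact: has_lbound_sdrop.
by exists k.
Qed.

Lemma sups_scale_le u a n : 0 < a -> has_ubound (range u) ->
  sups (fun k => a * u k) n <= a * sups u n.
Proof.
move=> a0 hl; apply: ge_sup; first by exists (a * u n); exists n => /=.
move=> _ [k /= kn <-]; rewrite ler_pM2l //; apply: ub_le_sup.
  exact: has_ubound_sdrop.
by exists k.
Qed.

Lemma bounded_scale a u : bounded_fun u -> bounded_fun (fun k => a * u k).
Proof.
move=> /bnd_get [B hB]; apply: (@bnd_of _ (`|a| * B)) => n.
by rewrite normrM ler_wpM2l.
Qed.

Lemma cvg_infs_b u : bounded_fun u -> cvgn (infs u).
Proof.
move=> b; apply: nondecreasing_is_cvgn; last exact: bounded_fun_has_ubound_infs.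
exact/nondecreasing_infs/bounded_fun_has_lbound.
Qed.

Lemma cvg_sups_b u : bounded_fun u -> cvgn (sups u).
Proof.
move=> b; apply: nonincreasing_is_cvgn; last exact: bounded_fun_has_lbound_sups.
exact/nonincreasing_sups/bounded_fun_has_ubound.
Qed.

Lemma limn_inf_scale u a : 0 < a -> bounded_fun u ->
  limn_inf (fun k => a * u k) = a * limn_inf u.
Proof.
move=> a0 b.
have E : infs (fun k => a * u k) = (fun n => a * infs u n).
  apply/funext => n; apply/eqP; rewrite eq_le infs_scale_le ?andbT //;
    last exact: bounded_fun_has_lbound.
  have ai : 0 < a^-1 by rewrite invr_gt0.
  have := @infs_scale_le (fun k => a * u k) a^-1 n ai.
  have -> : (fun k => a^-1 * (a * u k)) = u.
    by apply/funext => k; rewrite mulrA mulVf ?mul1r // gt_eqF.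
  move=> /(_ (bounded_fun_has_lbound (bounded_scale a u b))).
  by rewrite -(ler_pM2l a0) mulrA mulfV ?mul1r // gt_eqF.
rewrite /limn_inf E.
have := cvg_infs_b u b => c.
by apply/cvg_lim => //; apply: cvgMl_tmp.
Qed.


Lemma limn_sup_scale u a : 0 < a -> bounded_fun u ->
  limn_sup (fun k => a * u k) = a * limn_sup u.
Proof.
move=> a0 b.
have E : sups (fun k => a * u k) = (fun n => a * sups u n).
  apply/funext => n; apply/eqP; rewrite eq_le sups_scale_le //;
    last exact: bounded_fun_has_ubound.
  have ai : 0 < a^-1 by rewrite invr_gt0.
  have := @sups_scale_le (fun k => a * u k) a^-1 n ai.
  have -> : (fun k => a^-1 * (a * u k)) = u.
    by apply/funext => k; rewrite mulrA mulVf ?mul1r // gt_eqF.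
  move=> /(_ (bounded_fun_has_ubound (bounded_scale a u b))).
  by rewrite -(ler_pM2l a0) mulrA mulfV ?mul1r // gt_eqF.
rewrite /limn_sup E.
have := cvg_sups_b u b => c.
by apply/cvg_lim => //; apply: cvgMl_tmp.
Qed.

Lemma limn_inf_mono u v : bounded_fun u -> bounded_fun v ->
  (forall n, u n <= v n) -> limn_inf u <= limn_inf v.
Proof.
move=> bu bv h; apply: ler_lim; [exact: cvg_infs_b|exact: cvg_infs_b|].
apply: nearW => n; apply: lb_le_inf; first by exists (v n); exists n => /=.
move=> _ [k /= kn <-]; apply: le_trans (h k); apply: ge_inf.
  exact/has_lbound_sdrop/bounded_fun_has_lbound.
by exists k.
Qed.

Lemma limn_sup_mono u v : bounded_fun u -> bounded_fun v ->
  (forall n, u n <= v n) -> limn_sup u <= limn_sup v.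
Proof.
move=> bu bv h; apply: ler_lim; [exact: cvg_sups_b|exact: cvg_sups_b|].
apply: nearW => n; apply: ge_sup; first by exists (u n); exists n => /=.
move=> _ [k /= kn <-]; apply: le_trans (h k) _; apply: ub_le_sup.
  exact/has_ubound_sdrop/bounded_fun_has_ubound.
by exists k.
Qed.

Lemma limn_inf_addcvg u v l : bounded_fun u -> v @ \oo --> l ->
  limn_inf (fun n => u n + v n) = limn_inf u + l.
Proof.
move=> bu cv.
have bv : bounded_fun v by apply: cvg_seq_bounded; apply/cvg_ex; exists l.
have [iv _] := cvg_limn_inf_sup cv.
apply/eqP; rewrite eq_le; apply/andP; split; last first.
  by rewrite -iv; exact: (le_limn_infD bu bv).
have cvN : (- v) @ \oo --> - l by apply: cvgN.
have [ivN _] := cvg_limn_inf_sup cvN.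
have := le_limn_infD (bounded_funD bu bv) (bounded_funN bv).
have -> : (u \+ v) \+ - v = u by apply/funext => n /=; rewrite addrK.
by rewrite ivN -lerBrDr opprK.
Qed.

Lemma limn_sup_addcvg u v l : bounded_fun u -> v @ \oo --> l ->
  limn_sup (fun n => u n + v n) = limn_sup u + l.
Proof.
move=> bu cv.
have bv : bounded_fun v by apply: cvg_seq_bounded; apply/cvg_ex; exists l.
have [_ sv] := cvg_limn_inf_sup cv.
apply/eqP; rewrite eq_le; apply/andP; split.
  by rewrite -sv; exact: (le_limn_supD bu bv).
have cvN : (- v) @ \oo --> - l by apply: cvgN.
have [_ svN] := cvg_limn_inf_sup cvN.
have := le_limn_supD (bounded_funD bu bv) (bounded_funN bv).
have -> : (u \+ v) \+ - v = u by apply/funext => n /=; rewrite addrK.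
by rewrite svN lerBrDr.
Qed.


Lemma cvg_err u l (C : R) (s : nat -> nat) : 0 <= C ->
  (forall K, exists N, forall n, (N <= n)%N -> (K <= s n)%N) ->
  (forall n, (0 < s n)%N -> `|u n - l| <= C / (s n)%:R) -> u @ \oo --> l.
Proof.
move=> C0 hs hu; apply/cvgrPdist_le => eps eps0.
pose K := (Num.bound (C / eps)).+1.
have [N hN] := hs K.
near=> n.
have Kn : (K <= s n)%N by apply: hN; near: n; apply: nbhs_infty_ge.
have sn0 : (0 < s n)%N by apply: leq_trans Kn.
rewrite distrC (le_trans (hu n sn0)) //.
have snR : (0 : R) < (s n)%:R by rewrite ltr0n.
rewrite ler_pdivrMr // .
have hb := archi_boundP (divr_ge0 C0 (ltW eps0)).
have : C / eps < (s n)%:R.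
  apply: (lt_le_trans hb); rewrite ler_nat; apply: leq_trans Kn; exact: leqnSn.
by rewrite ltr_pdivrMr // => /ltW; rewrite mulrC.
Unshelve. all: end_near. Qed.

End Real.

Section P1.
Variable R : realType.

Lemma ratio01 (a n : nat) : (a <= n)%N -> (0 : R) <= (a%:R / n%:R : R) <= 1.
Proof.
move=> h; case: n h => [|n] h; first by rewrite invr0 mulr0 lexx ler01.
rewrite divr_ge0 //= ler_pdivrMr ?ltr0n // mul1r ler_nat //.
Qed.

Lemma zratio01 w n : 0 <= zratio R w n <= 1.
Proof. exact/ratio01/Zcount_le. Qed.

Lemma pratio01 w n : 0 <= pratio R w n <= 1.
Proof. apply/ratio01; apply: leq_trans (part1_up w n) (Zcount_le w n). Qed.

Lemma inv_cvg0 (c : R) : 0 <= c -> (fun n : nat => - (c / n%:R)) @ \oo --> 0.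
Proof.
move=> c0; apply: (@cvg_err _ _ _ c id) => //.
  by move=> K; exists K.
by move=> n _; rewrite subr0 normrN ger0_norm // divr_ge0.
Qed.

Lemma p_le_z w n : pratio R w n <= zratio R w n.
Proof. by rewrite /pratio /zratio ler_wpM2r ?invr_ge0 // ler_nat part1_up. Qed.

Lemma p_ge_z w n : 5/3 * zratio R w n + (- (2/3) - (4/3) / n%:R) <= pratio R w n.
Proof.
rewrite /pratio /zratio.
case: n => [|n]; first by rewrite !invr0 !mulr0 add0r subr0; lra.
move: (Zcount w n.+1) (Pcount w n.+1) (part1_low w n.+1) => Z P.
rewrite -(ler_nat R) !natrD !natrM => h.
have m0 : (0 : R) < n.+1%:R by rewrite ltr0n.
move: h; set x := Z%:R; set y := P%:R; set m := n.+1%:R => h.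
rewrite [X in X <= _](_ : _ = (5/3 * x - 2/3 * m - 4/3) * m^-1); last first.
  by field; rewrite gt_eqF.
rewrite ler_pM2r ?invr_gt0 //.
lra.
Qed.

Lemma part1_real w :
      (5 * r_inf R w - 2) / 3 <= R_inf R w /\ R_inf R w <= r_inf R w /\
      (5 * r_sup R w - 2) / 3 <= R_sup R w /\ R_sup R w <= r_sup R w.
Proof.
have bz : bounded_fun (zratio R w) by apply: bnd01 => n; exact: zratio01.
have bp : bounded_fun (pratio R w) by apply: bnd01 => n; exact: pratio01.
have bz5 := @bounded_scale R (5/3) (zratio R w) bz.
have ce : (fun n : nat => - (2/3) - (4/3) / n%:R) @ \oo --> (- (2/3) : R).
  rewrite -[X in _ --> X]addr0; apply: cvgD; first exact: cvg_cst.
  by apply: inv_cvg0; lra.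
have bl : bounded_fun (fun n => 5/3 * zratio R w n + (- (2/3) - (4/3) / n%:R)).
  apply: bounded_funD bz5 _.
  by apply: cvg_seq_bounded; apply/cvg_ex; exists (- (2/3) : R).
have five : (0 : R) < 5/3 by lra.
split; [|split; [|split]].
- have := limn_inf_mono _ _ _ bl bp (p_ge_z w).
  rewrite (limn_inf_addcvg _ _ _ _ bz5 ce) limn_inf_scale // /R_inf /r_inf.
  by move=> h; lra.
- exact: limn_inf_mono _ _ _ bp bz (p_le_z w).
- have := limn_sup_mono _ _ _ bl bp (p_ge_z w).
  rewrite (limn_sup_addcvg _ _ _ _ bz5 ce) limn_sup_scale // /R_sup /r_sup.
  by move=> h; lra.
- exact: limn_sup_mono _ _ _ bp bz (p_le_z w).
Qed.

End P1.

Section Build.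
Variable R : realType.

Definition fr (r : R) (s : nat) : nat := Num.truncn (r * (s * s)%:R).

Lemma fr_bounds r s : 0 <= r ->
  (fr r s)%:R <= r * (s * s)%:R < (fr r s)%:R + 1.
Proof.
move=> r0; have := truncn_itv (mulr_ge0 r0 (ler0n _ (s * s))).
by rewrite -/(fr r s) -natr1.
Qed.

Lemma sq_split (s : nat) : ((s.+1 * s.+1)%:R : R) = (s * s)%:R + 2 * s%:R + 1.
Proof. by rewrite !natrM -addn1 natrD; ring. Qed.

Lemma fr0 r : fr r 0 = 0%N.
Proof. by rewrite /fr mul0n mulr0 truncn0. Qed.

Lemma fr_mono r : 0 <= r -> forall s, (fr r s <= fr r s.+1)%N.
Proof.
move=> r0 s; apply: le_truncn; apply: ler_wpM2l => //.
by rewrite ler_nat; nia.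
Qed.

Lemma fr_step r : 0 <= r <= 1 -> forall s, (fr r s.+1 <= fr r s + s.*2.+1)%N.
Proof.
move=> /andP[r0 r1] s.
have [h1 _] := andP (fr_bounds r s.+1 r0).
have [_ h2] := andP (fr_bounds r s r0).
have X0 : (0 : R) <= 2 * s%:R + 1 by apply: addr_ge0 => //; apply: mulr_ge0.
have h3 : r * ((s * s)%:R + 2 * s%:R + 1) <= r * (s * s)%:R + 2 * s%:R + 1.
  rewrite -addrA mulrDr -addrA lerD2l; nra.
rewrite sq_split in h1.
rewrite -ltnS -(ltr_nat R).
rewrite (_ : (fr r s + s.*2.+1).+1 = fr r s + s * 2 + 2)%N; last by lia.
rewrite !natrD natrM.
move: h1 h2 h3; set a := r * _; set b := r * _; lra.
Qed.


Lemma Zu_bound r n : 0 <= r <= 1 ->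
  r * n%:R - (2 * (isqrt n)%:R + 2) <= (Zcount (uw (fr r)) n)%:R <=
  r * n%:R + (2 * (isqrt n)%:R + 1).
Proof.
move=> hr; have /andP[r0 r1] := hr.
rewrite (@Zc_formula (fr r) (fr0 r) (fr_mono r r0) (fr_step r hr)).
have := isqrt_spec n; set s := isqrt n => /andP[hs1 hs2].
have hm : (minn (zb (fr r) s) (n - s * s) <= fr r s.+1 - fr r s)%N.
  by rewrite /zb geq_minl.
have hmono := fr_mono r r0 s.
have hA : (fr r s + minn (zb (fr r) s) (n - s * s))%:R <= (fr r s.+1)%:R :> R.
  by rewrite ler_nat; lia.
have hB : (fr r s)%:R <= (fr r s + minn (zb (fr r) s) (n - s * s))%:R :> R.
  by rewrite ler_nat; lia.
have [_ h2] := andP (fr_bounds r s r0).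
have [h1 _] := andP (fr_bounds r s.+1 r0).
have h3 : r * (s * s)%:R <= r * n%:R by apply: ler_wpM2l => //; rewrite ler_nat.
have h4 : r * n%:R <= r * (s.+1 * s.+1)%:R.
  by apply: ler_wpM2l => //; rewrite ler_nat ltnW.
have X0 : (0 : R) <= 2 * s%:R + 1 by apply: addr_ge0 => //; apply: mulr_ge0.
have h5 : r * (s.+1 * s.+1)%:R <= r * (s * s)%:R + 2 * s%:R + 1.
  rewrite sq_split -addrA mulrDr -addrA lerD2l; nra.
move: hA hB; set X := (_ + _)%:R => hA hB.
apply/andP; split; lra.
Qed.

Lemma isqrt_big K n : (K * K <= n)%N -> (K <= isqrt n)%N.
Proof.
move=> h; have := @isqrt_mono _ _ h.
by rewrite (@isqrt_unique (K * K) K) //; apply/andP; split => //; nia.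
Qed.

Lemma ratio_cvg (X : nat -> R) (l C : R) : 0 <= C ->
  (forall n, `|X n - l * n%:R| <= C * ((isqrt n)%:R + 1)) ->
  (fun n => X n / n%:R) @ \oo --> l.
Proof.
move=> C0 hX; apply: (@cvg_err R _ _ (2 * C) isqrt).
- by apply: mulr_ge0.
- by move=> K; exists (K * K)%N => n; apply: isqrt_big.
move=> n sn0.
have := isqrt_spec n; set s := isqrt n => /andP[hs1 hs2].
have n0 : (0 < n)%N by apply: leq_trans hs1; rewrite muln_gt0 sn0.
have nR : (0 : R) < n%:R by rewrite ltr0n.
have sR : (0 : R) < s%:R by rewrite ltr0n.
have -> : X n / n%:R - l = (X n - l * n%:R) / n%:R by field; rewrite gt_eqF.
rewrite normrM (ger0_norm (_ : 0 <= n%:R^-1)); last by rewrite invr_ge0 ler0n.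
have hXn := hX n; rewrite -/s in hXn.
apply: (@le_trans _ _ (C * (s%:R + 1) * n%:R^-1)).
  by apply: ler_wpM2r => //; rewrite invr_ge0 ler0n.
rewrite -mulrA -mulrA [X in _ <= X]mulrCA; apply: ler_wpM2l => //.
rewrite ler_pdivrMr // mulrAC ler_pdivlMr //.
have hss : s%:R * s%:R <= n%:R :> R by rewrite -natrM ler_nat.
have s1 : (1 : R) <= s%:R by rewrite ler1n.
have s2 : s%:R <= s%:R * s%:R :> R by rewrite ler_peMr // ltW.
move: hss s2; set t := s%:R * s%:R => hss s2.
rewrite mulrDl mul1r -/t; lra.
Qed.

End Build.

Section Final.
Variable R : realType.

Lemma cvg_both (w : word) (a b : R) :
  zratio R w @ \oo --> a -> pratio R w @ \oo --> b ->
  r_inf R w = a /\ r_sup R w = a /\ R_inf R w = b /\ R_sup R w = b.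
Proof.
move=> ha hb; have [h1 h2] := cvg_limn_inf_sup ha.
have [h3 h4] := cvg_limn_inf_sup hb.
by rewrite /r_inf /r_sup /R_inf /R_sup h1 h2 h3 h4.
Qed.

Lemma part3 (r : R) : 0 <= r <= 1 ->
  exists w : word, r_inf R w = r /\ r_sup R w = r /\ R_inf R w = r /\ R_sup R w = r.
Proof.
move=> hr; have /andP[r0 r1] := hr.
pose f := fr R r; exists (uw f); apply: cvg_both.
- apply: (@ratio_cvg R _ r 2) => // n.
  have /andP[h1 h2] := Zu_bound R r n hr.
  by rewrite ler_norml; apply/andP; split; lra.
- apply: (@ratio_cvg R _ r 4) => // n.
  have /andP[h1 h2] := Zu_bound R r n hr.
  have N1 := part1_up (uw f) n.
  have N2 := @PZE f (fr0 R r) n.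
  have N3 := @Ecount_le f (fr0 R r) n.
  have N4 : (Zcount (uw f) n <= Pcount (uw f) n + ((isqrt n).*2 + 2))%N by lia.
  move: N1 N4; rewrite -(ler_nat R) -(ler_nat R) !natrD -muln2 natrM => N1 N4.
  move: h1 h2 N1 N4; rewrite -/f.
  set Z := (Zcount _ _)%:R; set P := (Pcount _ _)%:R; set s := (isqrt n)%:R.
  move=> h1 h2 N1 N4.
  by rewrite ler_norml; apply/andP; split; lra.
Qed.


Lemma Gp_le k : (Gp k <= 4)%N.
Proof. by rewrite /Gp; case: k => [|[|[|[|[|k]]]]] //=; case: k. Qed.

Lemma part2 (r : R) : 2 / 5 <= r <= 1 ->
  exists w : word, r_inf R w = r /\ r_sup R w = r /\
       R_inf R w = (5 * r - 2) / 3 /\ R_sup R w = (5 * r - 2) / 3.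
Proof.
move=> /andP[r0 r1].
set rho := (5 * r - 2) / 3.
have hrho : 0 <= rho <= 1 by apply/andP; split; rewrite /rho; lra.
pose f := fr R rho; exists (ww f).
have key : forall n,
  [/\ (n.*2 + 3 * Zcount (uw f) n <= 5 * Zcount (ww f) n + 4 * Ecount f n)%N,
      (5 * Zcount (ww f) n <= n.*2 + 3 * Zcount (uw f) n + 6 + 4 * Ecount f n)%N,
      (3 * Pcount (ww f) n + n.*2 <= 5 * Zcount (ww f) n + 8 * Ecount f n + 8)%N,
      (5 * Zcount (ww f) n <= 3 * Pcount (ww f) n + n.*2 + 4)%N &
      (Ecount f n <= (isqrt n).*2 + 2)%N].
  move=> n.
  have [L U] := @C4 f (fr0 R rho) n.
  have G := Gp_le (n.+1 %% 5).
  have B := @badc_inv f (fr0 R rho) n.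
  have P5 := @C5 f (fr0 R rho) n.
  have P1 := part1_low (ww f) n.
  have E := @Ecount_le f (fr0 R rho) n.
  move: L U B P5 P1 E G; case: (uw f n) => /= L U B P5 P1 E G; split; lia.
apply: cvg_both.
- apply: (@ratio_cvg R _ r 4) => // n.
  have /andP[h1 h2] := Zu_bound R rho n hrho.
  have [K1 K2 K3 K4 K5] := key n.
  move: K1 K2 K5; rewrite -!(ler_nat R) -!muln2 !natrD !natrM.
  move: h1 h2; rewrite -/f.
  set Zu := (Zcount (uw f) n)%:R; set Zw := (Zcount (ww f) n)%:R.
  set E := (Ecount f n)%:R; set s := (isqrt n)%:R; set m := n%:R.
  have rr : rho * m = (5 * (r * m) - 2 * m) / 3 by rewrite /rho; field.
  rewrite rr => h1 h2 K1 K2 K5.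
  have s0 : 0 <= s by rewrite /s ler0n.
  by rewrite ler_norml; apply/andP; split; lra.
- apply: (@ratio_cvg R _ rho 20) => // n.
  have /andP[h1 h2] := Zu_bound R rho n hrho.
  have [K1 K2 K3 K4 K5] := key n.
  move: K1 K2 K3 K4 K5; rewrite -!(ler_nat R) -!muln2 !natrD !natrM.
  move: h1 h2; rewrite -/f.
  set Zu := (Zcount (uw f) n)%:R; set Zw := (Zcount (ww f) n)%:R.
  set P := (Pcount (ww f) n)%:R.
  set E := (Ecount f n)%:R; set s := (isqrt n)%:R; set m := n%:R.
  set x := rho * m.
  move=> h1 h2 K1 K2 K3 K4 K5; have s0 : 0 <= s by rewrite /s ler0n.
  by rewrite ler_norml; apply/andP; split; lra.
Qed.

End Final.

Close Scope classical_set_scope.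

Theorem theorem3p1 (R : realType) :
  (forall w : word,
      (5 * r_inf R w - 2) / 3 <= R_inf R w /\ R_inf R w <= r_inf R w /\
      (5 * r_sup R w - 2) / 3 <= R_sup R w /\ R_sup R w <= r_sup R w) /\
  (forall r : R, 2 / 5 <= r <= 1 ->
     exists w : word, r_inf R w = r /\ r_sup R w = r /\
       R_inf R w = (5 * r - 2) / 3 /\ R_sup R w = (5 * r - 2) / 3) /\
  (forall r : R, 0 <= r <= 1 ->
     exists w : word, r_inf R w = r /\ r_sup R w = r /\
       R_inf R w = r /\ R_sup R w = r).
Proof.
split; first exact: part1_real.
split; [exact: part2 | exact: part3].
Qed.
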